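(* In the standing setting, let $(A,B,R,\sigma)$ be a normalized context and $(g,f)\in\mathcal{FC}$. If $g^{\uparrow}\ne f_\bot$, then there is no concept $\langle g_0,f_0\rangle\in\mathcal M$ with $\langle g,g^{\uparrow}\rangle\prec\langle g_0,f_0\rangle\prec\langle g_\top,f_\bot\rangle$. Dually, if $f^{\downarrow}\ne g_\bot$, then there is no concept $\langle g_0,f_0\rangle\in\mathcal M$ with $\langle g_\bot,f_\top\rangle\prec\langle g_0,f_0\rangle\prec\langle f^{\downarrow},f\rangle$. (Here $\prec$ denotes the strict order of $\mathcal M$.)
   Context: Adjoint triple: for posets $(P_1,\le_1),(P_2,\le_2),(P_3,\le_3)$, maps $\&\colon P_1\times P_2\to P_3$, $\swarrow\colon P_3\times P_2\to P_1$, $\nwarrow\colon P_3\times P_1\to P_2$ with $x\le_1 z\swarrow y \iff x\,\&\,y\le_3 z \iff y\le_2 z\nwarrow x$ for all $x,y,z$. For lower-bounded posets, $\&$ has zero-divisors if there are $x\ne\bot_1$, $y\neq\bot_2$ with $x\,\&\,y=\bot_3$. Standing setting: $(L_1,\preceq_1,\bot_1,\top_1)$ and $(L_2,\preceq_2,\bot_2,\top_2)$ are complete lattices and $(P,\le,\bot,\top)$ is a bounded poset. A multi-adjoint frame consists of adjoint triples $(\&_i,\swarrow^i,\nwarrow_i)$, $i=1,\dots,n$, with respect to $L_1,L_2,P$; a property-oriented frame consists of adjoint triples $(\&^p_j,\swarrow_p^j,\nwarrow^p_j)$, $j=1,\dots,m$, with respect to $P,L_2,L_1$; an object-oriented frame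 consists of adjoint triples $(\&^o_k,\swarrow_o^k,\nwarrow^o_k)$, $k=1,\dots,s$, with respect to $L_1,P,L_2$. All conjunctors $\&_i,\&^p_j,\&^o_k$ have no zero-divisors. A context $(A,B,R,\sigma)$ consists of non-empty sets $A,B$, $R\colon A\times B\to P$, and maps $\sigma,\sigma_p,\sigma_o$ from $A\times B$ to the index sets of the three frames. It is normalized if every $a\in A$ has $b_1,b_2\in B$ with $R(a,b_1)\ne\bot$, $R(a,b_2)=\bot$, and every $b\in B$ has $a_1,a_2\in A$ with $R(a_1,b)\neq\bot$, $R(a_2,b)=\bot$. Concept-forming operators: $g^{\uparrow}(a)=\inf\{R(a,b)\swarrow^{\sigma(a,b)}g(b)\mid b\in B\}$ for $g\in L_2^B$ and $f^{\downarrow}(b)=\inf\{R(a,b)\nwarrow_{\sigma(a,b)}f(a)\mid a\in A\}$ for $f\in L_1^A$. Multi-adjoint concept lattice $\mathcal M=\{\langle g,f\rangle\mid g\in L_2^B,f\in L_1^A,\ g^{\uparrow}=f,\ f^{\downarrow}=g\}$, ordered by $\langle g_1,f_1\rangle\preceq\langle g_2,f_2\rangle$ iff $g_1\preceq_2 g_2$ pointwise. Fuzzy necessity operators: $g^{\uparrow_N}(a)=\inf\{g(b)\swarrow_o^{\sigma_o(a,b)}R(a,b)\mid b\in B\}$ and $f^{\downarrow^N}(b)=\inf\{f(a)\nwarrow^p_{\sigma_p(a,b)}R(a,b)\mid a\in A\}$. $\mathcal F_N=\{(g,f)\mid g\in L_2^B,\ f\in L_1^A,\ g^{\uparrow_N}=f,\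 f^{\downarrow^N}=g\}$. For $X\subseteq B$, $\chi_X\in L_2^B$ takes value $\top_2$ on $X$ and $\bot_2$ elsewhere; for $Y\subseteq A$, $\chi_Y\in L_1^A$ takes value $\top_1$ on $Y$ and $\bot_1$ elsewhere. $\mathcal{FC}=\{(\chi_X,\chi_Y)\in\mathcal F_N\mid \varnothing\ne X\subsetneq B,\ \varnothing\neq Y\subsetneq A\}$. $g_\top,g_\bot\in L_2^B$ are the constant maps with values $\top_2,\bot_2$; $f_\top,f_\bot\in L_1^A$ are the constant maps with values $\top_1,\bot_1$. *)

(* Defs.v *)
From mathcomp Require Import ssreflect ssrfun ssrbool eqtype ssrnat fintype.

Set Implicit Arguments.
Unset Strict Implicit.
Unset Printing Implicit Defensive.

Record poset := Poset {
  pcar :> Type;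
  ple : pcar -> pcar -> Prop;
  ple_refl : forall x, ple x x;
  ple_trans : forall x y z, ple x y -> ple y z -> ple x z;
  ple_anti : forall x y, ple x y -> ple y x -> x = y
}.

Record bposet := BPoset {
  bp_poset :> poset;
  pbot : bp_poset;
  ptop : bp_poset;
  pbot_le : forall x, ple pbot x;
  ple_top : forall x, ple x ptop
}.

Record clattice := CLattice {
  cl_poset :> poset;
  inf : (cl_poset -> Prop) -> cl_poset;
  inf_lb : forall (S : cl_poset -> Prop) x, S x -> ple (inf S) x;
  inf_glb : forall (S : cl_poset -> Prop) y,
      (forall x, S x -> ple y x) -> ple y (inf S)
}.

Definition cbot (L : clattice) : L := inf (fun _ : L => True).
Definition ctop (L : clattice) : L := inf (fun _ : L => False).

Definition adjoint_triple (P1 P2 P3 : poset)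
  (conj : P1 -> P2 -> P3) (sw : P3 -> P2 -> P1) (nw : P3 -> P1 -> P2) : Prop :=
  forall (x : P1) (y : P2) (z : P3),
    (ple x (sw z y) <-> ple (conj x y) z) /\
    (ple (conj x y) z <-> ple y (nw z x)).

Definition has_zero_divisors (P1 P2 P3 : poset) (b1 : P1) (b2 : P2) (b3 : P3)
  (conj : P1 -> P2 -> P3) : Prop :=
  exists x y, x <> b1 /\ y <> b2 /\ conj x y = b3.

Record ma_frame (L1 L2 : clattice) (P : bposet) := MAFrame {
  ma_n : nat;
  ma_and : 'I_ma_n -> L1 -> L2 -> P;
  ma_sw : 'I_ma_n -> P -> L2 -> L1;
  ma_nw : 'I_ma_n -> P -> L1 -> L2;
  ma_adj : forall i, adjoint_triple (ma_and i) (ma_sw i) (ma_nw i);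
  ma_nzd : forall i, ~ has_zero_divisors (cbot L1) (cbot L2) (pbot P) (ma_and i)
}.

Record po_frame (L1 L2 : clattice) (P : bposet) := POFrame {
  po_m : nat;
  po_and : 'I_po_m -> P -> L2 -> L1;
  po_sw : 'I_po_m -> L1 -> L2 -> P;
  po_nw : 'I_po_m -> L1 -> P -> L2;
  po_adj : forall j, adjoint_triple (po_and j) (po_sw j) (po_nw j);
  po_nzd : forall j, ~ has_zero_divisors (pbot P) (cbot L2) (cbot L1) (po_and j)
}.

Record oo_frame (L1 L2 : clattice) (P : bposet) := OOFrame {
  oo_s : nat;
  oo_and : 'I_oo_s -> L1 -> P -> L2;
  oo_sw : 'I_oo_s -> L2 -> P -> L1;
  oo_nw : 'I_oo_s -> L2 -> L1 -> P;
  oo_adj : forall k, adjoint_triple (oo_and k) (oo_sw k) (oo_nw k);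
  oo_nzd : forall k, ~ has_zero_divisors (cbot L1) (pbot P) (cbot L2) (oo_and k)
}.

Record context (L1 L2 : clattice) (P : bposet)
  (F : ma_frame L1 L2 P) (Fp : po_frame L1 L2 P) (Fo : oo_frame L1 L2 P) := Context {
  cA : Type;
  cB : Type;
  cA_ne : inhabited cA;
  cB_ne : inhabited cB;
  cR : cA -> cB -> P;
  csigma : cA -> cB -> 'I_(ma_n F);
  csigma_p : cA -> cB -> 'I_(po_m Fp);
  csigma_o : cA -> cB -> 'I_(oo_s Fo)
}.

Section Ops.
Variables (L1 L2 : clattice) (P : bposet).
Variables (F : ma_frame L1 L2 P) (Fp : po_frame L1 L2 P) (Fo : oo_frame L1 L2 P).
Variable K : context F Fp Fo.

Definition normalized : Prop :=
  (forall a : cA K, (exists b1, cR a b1 <> pbot P) /\ (exists b2, cR a b2 = pbot P)) /\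
  (forall b : cB K, (exists a1, cR a1 b <> pbot P) /\ (exists a2, cR a2 b = pbot P)).

Definition up (g : cB K -> L2) : cA K -> L1 := fun a =>
  inf (fun x : L1 => exists b, x = ma_sw (csigma a b) (cR a b) (g b)).
Definition down (f : cA K -> L1) : cB K -> L2 := fun b =>
  inf (fun y : L2 => exists a, y = ma_nw (csigma a b) (cR a b) (f a)).

Definition upN (g : cB K -> L2) : cA K -> L1 := fun a =>
  inf (fun x : L1 => exists b, x = oo_sw (csigma_o a b) (g b) (cR a b)).
Definition downN (f : cA K -> L1) : cB K -> L2 := fun b =>
  inf (fun y : L2 => exists a, y = po_nw (csigma_p a b) (f a) (cR a b)).

Definition in_M (g : cB K -> L2) (f : cA K -> L1) : Prop :=
  up g = f /\ down f = g.

Definition concept_le (c1 c2 : (cB K -> L2) * (cA K -> L1)) : Prop :=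
  forall b, ple (c1.1 b) (c2.1 b).
Definition concept_lt (c1 c2 : (cB K -> L2) * (cA K -> L1)) : Prop :=
  concept_le c1 c2 /\ c1 <> c2.

Definition in_FN (g : cB K -> L2) (f : cA K -> L1) : Prop :=
  upN g = f /\ downN f = g.

Definition chiB (X : pred (cB K)) : cB K -> L2 :=
  fun b => if X b then ctop L2 else cbot L2.
Definition chiA (Y : pred (cA K)) : cA K -> L1 :=
  fun a => if Y a then ctop L1 else cbot L1.

Definition in_FC (g : cB K -> L2) (f : cA K -> L1) : Prop :=
  exists (X : pred (cB K)) (Y : pred (cA K)),
    g = chiB X /\ f = chiA Y /\ in_FN g f /\
    (exists b, X b) /\ (exists b, ~~ X b) /\
    (exists a, Y a) /\ (exists a, ~~ Y a).

Definition g_top : cB K -> L2 := fun _ => ctop L2.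
Definition g_bot : cB K -> L2 := fun _ => cbot L2.
Definition f_top : cA K -> L1 := fun _ => ctop L1.
Definition f_bot : cA K -> L1 := fun _ => cbot L1.

End Ops.

Arguments g_top {L1 L2 P F Fp Fo} K _.
Arguments g_bot {L1 L2 P F Fp Fo} K _.
Arguments f_top {L1 L2 P F Fp Fo} K _.
Arguments f_bot {L1 L2 P F Fp Fo} K _.
Arguments normalized {L1 L2 P F Fp Fo} K.

(* Main.v *)
From Stdlib Require Import Classical FunctionalExtensionality.
Require Import Defs.
From mathcomp Require Import ssreflect ssrfun ssrbool eqtype ssrnat fintype.

Lemma cbot_le (L : clattice) (x : L) : ple (cbot L) x.
Proof. rewrite /cbot; by apply: inf_lb. Qed.

Lemma le_ctop (L : clattice) (x : L) : ple x (ctop L).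
Proof. apply: inf_glb => y []. Qed.

Lemma le_bot_eq (L : clattice) (x : L) : ple x (cbot L) -> x = cbot L.
Proof. move=> H; apply: ple_anti => //; exact: cbot_le. Qed.

Lemma top_le_eq (L : clattice) (x : L) : ple (ctop L) x -> x = ctop L.
Proof. move=> H; apply: ple_anti => //; exact: le_ctop. Qed.

Lemma pbot_eq (P : bposet) (x : P) : ple x (pbot P) -> x = pbot P.
Proof. move=> H; apply: ple_anti => //; exact: pbot_le. Qed.

Lemma nw_bot (L1 L2 : clattice) (P : bposet) (F : ma_frame L1 L2 P) (i : 'I_(ma_n F)) (x : L1) :
  x <> cbot L1 -> ma_nw i (pbot P) x = cbot L2.
Proof.
move=> Hx; apply: NNPP => Hy; apply: (@ma_nzd _ _ _ _ i).
exists x, (ma_nw i (pbot P) x); split => //; split => //.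
apply: pbot_eq; apply/(proj2 (ma_adj i x _ _)); exact: ple_refl.
Qed.

Lemma sw_bot (L1 L2 : clattice) (P : bposet) (F : ma_frame L1 L2 P) (i : 'I_(ma_n F)) (y : L2) :
  y <> cbot L2 -> ma_sw i (pbot P) y = cbot L1.
Proof.
move=> Hy; apply: NNPP => Hx; apply: (@ma_nzd _ _ _ _ i).
exists (ma_sw i (pbot P) y), y; split => //; split => //.
apply: pbot_eq; apply/(proj1 (ma_adj i _ y _)); exact: ple_refl.
Qed.

Lemma nw_botx (L1 L2 : clattice) (P : bposet) (F : ma_frame L1 L2 P) (i : 'I_(ma_n F)) (r : P) :
  ma_nw i r (cbot L1) = ctop L2.
Proof.
apply: top_le_eq; apply/(proj2 (ma_adj i _ _ _)); apply/(proj1 (ma_adj i _ _ _)).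
exact: cbot_le.
Qed.

Lemma sw_boty (L1 L2 : clattice) (P : bposet) (F : ma_frame L1 L2 P) (i : 'I_(ma_n F)) (r : P) :
  ma_sw i r (cbot L2) = ctop L1.
Proof.
apply: top_le_eq; apply/(proj1 (ma_adj i _ _ _)); apply/(proj2 (ma_adj i _ _ _)).
exact: cbot_le.
Qed.

Theorem mainTheorem14 (L1 L2 : clattice) (P : bposet)
  (F : ma_frame L1 L2 P) (Fp : po_frame L1 L2 P) (Fo : oo_frame L1 L2 P)
  (K : context F Fp Fo) (g : cB K -> L2) (f : cA K -> L1) :
  normalized K ->
  in_FC g f ->
  (up g <> f_bot K ->
     ~ exists (g0 : cB K -> L2) (f0 : cA K -> L1),
         in_M g0 f0 /\
         concept_lt (g, up g) (g0, f0) /\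
         concept_lt (g0, f0) (g_top K, f_bot K)) /\
  (down f <> g_bot K ->
     ~ exists (g0 : cB K -> L2) (f0 : cA K -> L1),
         in_M g0 f0 /\
         concept_lt (g_bot K, f_top K) (g0, f0) /\
         concept_lt (g0, f0) (down f, f)).
Proof.
move=> _ [X [Y [Eg [Ef [[HupN HdownN] [[bx HbX] [[bnx HbnX] [[ay HaY] [ana HanY]]]]]]]]].
have gX : forall b, X b -> g b = ctop L2 by move=> b Hb; rewrite Eg /chiB Hb.
have gnX : forall b, ~~ X b -> g b = cbot L2 by move=> b Hb; rewrite Eg /chiB (negbTE Hb).
have fY : forall a, Y a -> f a = ctop L1 by move=> a Ha; rewrite Ef /chiA Ha.
have fnY : forall a, ~~ Y a -> f a = cbot L1 by move=> a Ha; rewrite Ef /chiA (negbTE Ha).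
have RYnX : forall a b, Y a -> ~~ X b -> ctop L1 <> cbot L1 -> cR a b = pbot P.
  move=> a b Ha Hb Hne; apply: NNPP => HR.
  have H1 : ple (ctop L1) (oo_sw (csigma_o a b) (g b) (cR a b)).
    rewrite -(fY a Ha) -HupN; apply: inf_lb; by exists b.
  rewrite (gnX b Hb) in H1.
  move/(proj1 (oo_adj _ _ _ _)): H1 => H1.
  apply: (@oo_nzd _ _ _ _ (csigma_o a b)).
  exists (ctop L1), (cR a b); split => //; split => //; exact: le_bot_eq.
have RnYX : forall a b, ~~ Y a -> X b -> ctop L2 <> cbot L2 -> cR a b = pbot P.
  move=> a b Ha Hb Hne; apply: NNPP => HR.
  have H1 : ple (ctop L2) (po_nw (csigma_p a b) (f a) (cR a b)).
    rewrite -(gX b Hb) -HdownN; apply: inf_lb; by exists a.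
  rewrite (fnY a Ha) in H1.
  move/(proj2 (po_adj _ _ _ _)): H1 => H1.
  apply: (@po_nzd _ _ _ _ (csigma_p a b)).
  exists (cR a b), (ctop L2); split => //; split => //; exact: le_bot_eq.
have upLe : forall (h : cB K -> L2) a b,
    ple (up h a) (ma_sw (csigma a b) (cR a b) (h b)).
  move=> h a b; apply: inf_lb; by exists b.
have downLe : forall (h : cA K -> L1) a b,
    ple (down h b) (ma_nw (csigma a b) (cR a b) (h a)).
  move=> h a b; apply: inf_lb; by exists a.
split.
- move=> _ [g0 [f0 [[Hf0 Hg0] [[Hle1 Hne1] [Hle2 Hne2]]]]].
  case: (classic (ctop L2 = cbot L2)) => [Htb|Htb].
    have triv : forall y : L2, y = cbot L2.
      move=> y; apply: le_bot_eq; rewrite -Htb; exact: le_ctop.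
    have E : g0 = g by apply: functional_extensionality => b; rewrite (triv (g0 b)) (triv (g b)).
    by apply: Hne1; rewrite -Hf0 E.
  case: (classic (exists a, f0 a <> cbot L1)) => [[a Ha]|Hall].
    have Htb1 : ctop L1 <> cbot L1.
      move=> E; apply: Ha; apply: le_bot_eq; rewrite -E; exact: le_ctop.
    case HYa: (Y a).
      have E : g0 = g.
        apply: functional_extensionality => b; case HXb: (X b).
          rewrite gX //; apply: top_le_eq; rewrite -(gX b HXb); exact: Hle1.
        have HXb' : ~~ X b by rewrite HXb.
        rewrite gnX //; apply: le_bot_eq; rewrite -Hg0.
        have HR : cR a b = pbot P by apply: (RYnX a b _ HXb' Htb1); rewrite HYa.
        have := downLe f0 a b; rewrite HR nw_bot //.
      by apply: Hne1; rewrite -Hf0 E.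
    have HR : cR a bx = pbot P by apply: (RnYX a bx _ HbX Htb); rewrite HYa.
    exfalso; apply: Htb; apply: le_bot_eq.
    have H := Hle1 bx; rewrite /= gX // in H.
    apply: (ple_trans H); rewrite -(@nw_bot _ _ _ F (csigma a bx) _ Ha).
    rewrite -HR -Hg0; exact: downLe.
  have E : f0 = f_bot K.
    apply: functional_extensionality => a; apply: NNPP => H; apply: Hall; by exists a.
  have E2 : g0 = g_top K.
    apply: functional_extensionality => b; apply: top_le_eq; rewrite -Hg0 E.
    apply: inf_glb => y [a ->]; rewrite /f_bot nw_botx; exact: ple_refl.
  by apply: Hne2; rewrite E E2.
- move=> _ [g0 [f0 [[Hf0 Hg0] [[Hle1 Hne1] [Hle2 Hne2]]]]].
  case: (classic (ctop L1 = cbot L1)) => [Htb|Htb].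
    have triv : forall y : L1, y = cbot L1.
      move=> y; apply: le_bot_eq; rewrite -Htb; exact: le_ctop.
    have E : f0 = f by apply: functional_extensionality => a; rewrite (triv (f0 a)) (triv (f a)).
    by apply: Hne2; rewrite -Hg0 E.
  have f0Y : forall a, Y a -> f0 a = ctop L1.
    move=> a Ha; apply: top_le_eq; rewrite -Hf0; apply: inf_glb => x [b ->].
    apply/(proj1 (ma_adj _ _ _ _)); apply/(proj2 (ma_adj _ _ _ _)).
    apply: (ple_trans (Hle2 b)); rewrite /= -(fY a Ha); exact: downLe.
  case: (classic (exists b, g0 b <> cbot L2)) => [[b Hb]|Hall].
    case HXb: (X b).
      have Htb2 : ctop L2 <> cbot L2.
        move=> E; apply: Hb; apply: le_bot_eq; rewrite -E; exact: le_ctop.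
      have E : f0 = f.
        apply: functional_extensionality => a; case HYa: (Y a).
          by rewrite f0Y // fY.
        have HYa' : ~~ Y a by rewrite HYa.
        rewrite fnY //; apply: le_bot_eq; rewrite -Hf0.
        have HR : cR a b = pbot P by apply: (RnYX a b HYa' _ Htb2); rewrite HXb.
        have := upLe g0 a b; rewrite HR sw_bot //.
      by apply: Hne2; rewrite -Hg0 E.
    have HR : cR ay b = pbot P by apply: (RYnX ay b HaY _ Htb); rewrite HXb.
    exfalso; apply: Htb; apply: le_bot_eq.
    rewrite -(f0Y ay HaY) -Hf0 -(@sw_bot _ _ _ F (csigma ay b) _ Hb).
    rewrite -HR; exact: upLe.
  have E : g0 = g_bot K.
    apply: functional_extensionality => b; apply: NNPP => H; apply: Hall; by exists b.
  have E2 : f0 = f_top K.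
    apply: functional_extensionality => a; apply: top_le_eq; rewrite -Hf0 E.
    apply: inf_glb => y [b ->]; rewrite /g_bot sw_boty; exact: ple_refl.
  by apply: Hne1; rewrite E E2.
Qed.
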